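(* Let $n\ge 1$ and let $T_n$ be the $n\times n$ tridiagonal matrix with diagonal entries $(T_n)_{ii}=1$ for $1\le i\le n$, superdiagonal entries $(T_n)_{i,i+1}=i$ and subdiagonal entries $(T_n)_{i+1,i}=n-i$ for $1\le i\le n-1$, and all other entries $0$. Then $$\det(T_n)=\begin{cases}0 & \text{if } n \text{ is even},\\[4pt] \dfrac{(-1)^{\frac{n-1}{2}}\, n!}{2^{n-1}}\dbinom{n-1}{\frac{n-1}{2}} & \text{if } n \text{ is odd}.\end{cases}$$ *)

(* Defs.v *)
From mathcomp Require Import all_boot all_order all_algebra.
Set Implicit Arguments. Unset Strict Implicit. Unset Printing Implicit Defensive.
Import GRing.Theory Num.Theory.
Local Open Scope ring_scope.

(* T_n with 0-based indices: entry (i,j) for i,j : 'I_n.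
   Paper (1-based): T_{ii}=1, T_{i,i+1}=i, T_{i+1,i}=n-i.
   0-based with i = i0+1: T(i0,i0)=1, T(i0,i0+1)=i0+1, T(i0+1,i0)=n-(i0+1). *)
Definition Tmat (n : nat) : 'M[rat]_n :=
  \matrix_(i < n, j < n)
    (if i == j :> nat then 1
     else if j == i.+1 :> nat then (i.+1)%:R
     else if i == j.+1 :> nat then (n - j.+1)%:R
     else 0).

(* Main.v *)
Require Import Defs.
From mathcomp Require Import all_boot all_order all_algebra zify ring.
Set Implicit Arguments. Unset Strict Implicit. Unset Printing Implicit Defensive.
Import GRing.Theory Num.Theory.
Local Open Scope ring_scope.

Definition Mf (f : nat -> nat -> rat) k : 'M[rat]_k := \matrix_(i < k, j < k) f i j.

Lemma detM_rec f k (tri : forall i j : nat, (i.+1 < j)%N || (j.+1 < i)%N -> f i j = 0) :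
  \det (Mf f k.+2) = f k.+1 k.+1 * \det (Mf f k.+1) - f k k.+1 * f k.+1 k * \det (Mf f k).
Proof.
rewrite (expand_det_row _ ord_max) big_ord_recr /= big_ord_recr /=.
rewrite big1 ?add0r; last first.
  by move=> j _; rewrite mxE tri ?mul0r //= ltnS ltn_ord orbT.
rewrite !mxE /= addrC; congr (_ + _).
  rewrite /cofactor addnn -signr_odd odd_double expr0 mul1r; congr (_ * \det _).
  by apply/matrixP => a b; rewrite !mxE !lift_max.
rewrite /cofactor -signr_odd /=.
rewrite addnn odd_double /= expr1.
rewrite (expand_det_col _ ord_max) big_ord_recr /= big1 ?add0r; last first.
  move=> i _; rewrite !mxE tri ?mul0r //=.
  rewrite /bump; have := ltn_ord i; case: leqP; case: leqP; lia.
rewrite !mxE /cofactor addnn -signr_odd odd_double expr0 mul1r lift_max /= /bump leqnn /=.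
have -> : row' ord_max (col' ord_max (row' ord_max (col' (widen_ord (leqnSn k.+1) ord_max) (Mf f k.+2)))) = Mf f k.
  apply/matrixP => a b; rewrite !mxE !lift_max /= /bump /=.
  have hb : (b < k)%N by exact: ltn_ord b.
  by rewrite (leqNgt k b) hb /= add0n (leqNgt k b) hb.
by rewrite add1n mulN1r mulrN mulrA [f k.+1 k * _]mulrC.
Qed.

Definition g (n i j : nat) : rat :=
  if i == j then 1
  else if j == i.+1 then (i.+1)%:R
  else if i == j.+1 then (n - j.+1)%:R
  else 0.

Lemma g_tri n (i j : nat) : (i.+1 < j)%N || (j.+1 < i)%N -> g n i j = 0.
Proof.
rewrite /g => h.
have -> : (i == j) = false by apply/eqP; lia.
have -> : (j == i.+1) = false by apply/eqP; lia.
by have -> : (i == j.+1) = false by apply/eqP; lia.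
Qed.

Lemma Tmat_Mf n : Tmat n = Mf (g n) n.
Proof. by apply/matrixP => i j; rewrite !mxE. Qed.

Definition D n k := \det (Mf (g n) k).

Lemma D0 n : D n 0 = 1.
Proof. by rewrite /D det_mx00. Qed.

Lemma D1 n : D n 1 = 1.
Proof.
rewrite /D (expand_det_row _ ord0) big_ord1 !mxE /cofactor /g /= mul1r.
by rewrite det_mx00 mulr1.
Qed.

Lemma Drec n k : D n k.+2 = D n k.+1 - (k.+1 * (n - k.+1))%:R * D n k.
Proof.
rewrite /D detM_rec; last exact: g_tri.
have -> : g n k.+1 k.+1 = 1 by rewrite /g eqxx.
have -> : g n k k.+1 = k.+1%:R.
  by rewrite /g eqxx; have -> : (k == k.+1) = false by apply/eqP; lia.
have -> : g n k.+1 k = (n - k.+1)%:R.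
  rewrite /g eqxx; have -> : (k.+1 == k) = false by apply/eqP; lia.
  by have -> : (k == k.+2) = false by apply/eqP; lia.
by rewrite mul1r natrM.
Qed.

Lemma Dpair n j : (j.*2.+1 <= n)%N ->
  D n j.*2.+1 = (j.*2.+1)%:R * D n j.*2 /\
  D n j.*2.+2 = ((j.*2.+2)%:R - n%:R) * D n j.*2.+1.
Proof.
elim: j => [|j IH] h.
  rewrite /= Drec D1 D0; split; first by rewrite mulr1.
  rewrite mul1n natrB // mulr1 /=; ring.
have [A B] := IH ltac:(rewrite doubleS in h; lia).
rewrite doubleS.
have E1 : D n j.*2.+3 = (j.*2.+3)%:R * D n j.*2.+2.
  rewrite Drec B natrM natrB; last by rewrite doubleS in h; lia.
  rewrite !mulrA -!mulrBl; congr (_ * _).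
  rewrite -addn3 -addn2 -addn1 !natrD; ring.
split => //.
rewrite Drec E1 natrM natrB; last by rewrite doubleS in h; lia.
rewrite mulrA -mulrBl [X in _ = X * _]mulrC; congr (_ * _).
rewrite (_ : (j.*2.+4 = j.*2.+3 + 1)%N); last lia.
rewrite natrD; ring.
Qed.

Lemma Dprod n i : (i.*2 <= n.+1)%N ->
  D n i.*2 = \prod_(l < i) (((l.*2.+2)%:R - n%:R) * (l.*2.+1)%:R).
Proof.
elim: i => [|i IH] h; first by rewrite big_ord0 D0.
rewrite big_ord_recr /= -IH; last by rewrite doubleS in h; lia.
have [A B] := Dpair (n := n) (j := i) ltac:(rewrite doubleS in h; lia).
by rewrite doubleS B A; ring.
Qed.

Lemma prod_odd m : \prod_(l < m) (((l.*2.+2)%:R - (m.*2.+1)%:R) * (l.*2.+1)%:R)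
  = (-1) ^+ m * (\prod_(l < m) ((l.*2.+1)%:R : rat)) ^+ 2.
Proof.
rewrite big_split /= expr2 mulrA; congr (_ * _).
transitivity (\prod_(l < m) - ((l.*2.+1)%:R : rat)); last by rewrite prodrN card_ord.
rewrite (reindex_inj rev_ord_inj) /=.
apply: eq_bigr => l _ /=.
have hl := ltn_ord l.
rewrite (_ : (m.*2.+1 = (m - l.+1).*2.+2 + l.*2.+1)%N); last lia.
by rewrite natrD opprD addrA subrr add0r.
Qed.

Lemma oddprod_fact m : (\prod_(l < m) l.*2.+1 * 2 ^ m * m`! = (m.*2)`!)%N.
Proof.
elim: m => [|m IH]; first by rewrite big_ord0.
rewrite big_ord_recr /= doubleS !factS -IH expnS -!muln2; ring.
Qed.

Theorem mainTheorem4 (n : nat) (hn : (1 <= n)%N) :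
  \det (Tmat n) =
  (if odd n then
     ((-1) ^+ ((n - 1) %/ 2) * (n`!)%:R / (2 ^+ (n - 1)) * ('C(n - 1, (n - 1) %/ 2))%:R)
   else 0).
Proof.
rewrite Tmat_Mf -/(D n n).
case: (boolP (odd n)) => hodd.
  have [m em] : exists m, n = m.*2.+1.
    by exists n./2; rewrite -{1}[n]odd_double_half hodd add1n.
  subst n.
  have [A _] := Dpair (n := m.*2.+1) (j := m) (leqnn _).
  rewrite A Dprod; last lia.
  rewrite prod_odd -natr_prod.
  have -> : (m.*2.+1 - 1 = m.*2)%N by lia.
  have -> : (m.*2 %/ 2 = m)%N by lia.
  set p := (\prod_(l < m) l.*2.+1)%N.
  have hC := @bin_fact m.*2 m ltac:(lia).
  rewrite (_ : (m.*2 - m = m)%N) in hC; last lia.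
  have hP := oddprod_fact m; rewrite -/p in hP.
  have key : (p * p * 2 ^ m.*2 = (m.*2)`! * 'C(m.*2, m))%N.
    have hf : (0 < m`! * m`!)%N by rewrite muln_gt0 !fact_gt0.
    apply/eqP; rewrite -(eqn_pmul2r hf); apply/eqP.
    rewrite -[RHS]mulnA hC -{1}hP -hP -muln2 expnM; ring.
  have hF : ((m.*2)`!%:R : rat) != 0 by rewrite pnatr_eq0 -lt0n fact_gt0.
  have hCr : ('C(m.*2, m)%:R : rat) = (p%:R)^+2 * 2 ^+ m.*2 / (m.*2)`!%:R.
    apply: (mulfI hF); rewrite -natrM -key natrM natrX natrM -expr2 [RHS]mulrC divfK //.
  rewrite hCr factS natrM.
  have h2 : (2 ^+ m.*2 : rat) != 0 by rewrite expf_neq0 // pnatr_eq0.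
  field.
  by rewrite hF h2.
have [j ->] : exists j, n = j.*2.+2.
  have E := odd_double_half n; rewrite (negbTE hodd) add0n in E.
  move: hn; rewrite -E; case: (n./2) => [|k] //= _.
  by exists k; rewrite doubleS.
have [_ B] := Dpair (n := j.*2.+2) (j := j) (leqnSn _).
by rewrite B subrr mul0r.
Qed.
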